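(* Let $n\ge2$, $\beta\ge0$, $\alpha>-1$ with $\alpha<\beta-\frac12$. Then there is a constant $C$ depending only on $n,\alpha,\beta$ such that for all $0<\delta<\frac12$, $$\int_0^1\!\!\int_0^1\!\!\int_0^1\frac{s_1^\alpha\,t^{2n-3}\,ds_1\,ds_2\,dt}{(\delta+s_1+s_2+t^2)^{2+\beta}(\delta+s_1+s_2+t)^{2n-3}}\le C\,\delta^{\alpha-\beta+\frac12}.$$ *)

(* Defs.v *)
From HB Require Import structures.
From mathcomp Require Import all_boot all_order all_algebra.
From mathcomp Require Import all_classical all_reals all_analysis.
Set Implicit Arguments. Unset Strict Implicit. Unset Printing Implicit Defensive.
Import Order.TTheory GRing.Theory Num.Theory.
Import numFieldNormedType.Exports.
Local Open Scope classical_set_scope.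
Local Open Scope ring_scope.

Definition lemma6p5_integrand (R : realType) (n : nat) (alpha beta delta : R)
  (s1 s2 t : R) : R :=
  (s1 `^ alpha) * t ^+ (2 * n - 3)
  / ((delta + s1 + s2 + t ^+ 2) `^ (2 + beta)
     * (delta + s1 + s2 + t) ^+ (2 * n - 3)).

Definition lemma6p5_integral (R : realType) (n : nat) (alpha beta delta : R)
  : \bar R :=
  (\int[@lebesgue_measure R]_(s1 in `[0%R, 1%R])
    \int[@lebesgue_measure R]_(s2 in `[0%R, 1%R])
      \int[@lebesgue_measure R]_(t in `[0%R, 1%R])
        (lemma6p5_integrand n alpha beta delta s1 s2 t)%:E)%E.

(* Main.v *)
Require Import Defs.
From HB Require Import structures.
From mathcomp Require Import all_boot all_order all_algebra.
From mathcomp Require Import all_classical all_reals all_analysis.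
From mathcomp Require Import measurable_realfun.
From mathcomp.algebra_tactics Require Import ring lra.
Import Order.TTheory GRing.Theory Num.Theory.
Import numFieldNormedType.Exports.
Local Open Scope ring_scope.

Section H1.
Local Open Scope classical_set_scope.
Local Open Scope ereal_scope.

Lemma le_integral_nm (R : realType) (D : set R) (f g : R -> \bar R) :
  (forall x, D x -> 0 <= f x) -> (forall x, D x -> f x <= g x) ->
  \int[@lebesgue_measure R]_(x in D) f x <= \int[@lebesgue_measure R]_(x in D) g x.
Proof.
move=> f0 fg.
have g0 : forall x, D x -> 0 <= g x by move=> x Dx; exact: le_trans (f0 x Dx) (fg x Dx).
rewrite [leLHS]ge0_integralE// [leRHS]ge0_integralE//.
apply: le_ereal_sup => _ [h /= hf <-]; exists h => //= x.
apply: le_trans (hf x) _; rewrite /patch; case: ifP => // /set_mem Dx; exact: fg.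
Qed.

End H1.

Section H2.
Local Open Scope classical_set_scope.

Lemma powF_derive (R : realType) (r z : R) : 0 < z -> r + 1 != 0 ->
  is_derive z 1 (fun s : R => (r + 1)^-1 * s `^ (r + 1)) (z `^ r).
Proof.
move=> z0 r1.
have := is_deriveZ (r+1)^-1 (is_derive1_powR (r+1) z0).
rewrite /GRing.scale /= mulrA mulVf // mul1r addrK.
by [].
Qed.

Lemma int_pow (R : realType) (r x y : R) : 0 < x -> x < y -> r + 1 != 0 ->
  (\int[@lebesgue_measure R]_(s in `[x, y]) (s `^ r)%:E =
   ((r + 1)^-1 * y `^ (r + 1) - (r + 1)^-1 * x `^ (r + 1))%:E)%E.
Proof.
move=> x0 xy r1.
have Fd (z : R) : 0 < z -> is_derive z 1 (fun s : R => (r + 1)^-1 * s `^ (r + 1)) (z `^ r).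
  by move=> z0; exact: powF_derive.
have Fc (z : R) : 0 < z -> {for z, continuous (fun s : R => (r + 1)^-1 * s `^ (r + 1))}.
  move=> z0; apply: differentiable_continuous; rewrite -derivable1_diffP.
  by have [] := Fd z z0.
apply: (@continuous_FTC2 R (fun s : R => s `^ r) (fun s : R => (r + 1)^-1 * s `^ (r + 1)) x y xy).
- apply: derivable_within_continuous => z; rewrite in_itv/= => /andP[xz _].
  have z0 : 0 < z by exact: lt_le_trans xz.
  have := is_derive1_powR r z0; by case.
- split.
  + move=> z; rewrite in_itv/= => /andP[xz _].
    have z0 : 0 < z by exact: lt_trans xz.
    by have [] := Fd z z0.
  + by apply: cvg_at_right_filter; exact: Fc.
  + by apply: cvg_at_left_filter; apply: Fc; exact: lt_trans xy.
- move=> z; rewrite in_itv/= => /andP[xz _].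
  have z0 : 0 < z by exact: lt_trans xz.
  by rewrite derive1E; have [_ ->] := Fd z z0.
Qed.

Lemma int_pow0 (R : realType) (a c : R) : -1 < a -> 0 < c ->
  (\int[@lebesgue_measure R]_(s in `]0%R, c]) (s `^ a)%:E <=
   ((a + 1)^-1 * c `^ (a + 1))%:E)%E.
Proof.
move=> a1 c0.
have a10 : 0 < a + 1 by rewrite -(opprK 1) subr_gt0.
set f := fun s : R => (s `^ a)%:E.
have mf : measurable_fun setT f.
  by apply: measurableT_comp => //; exact: measurable_powR.
pose e (k : nat) := c / k.+2%:R.
have e0 k : 0 < e k by rewrite /e divr_gt0.
have ec k : e k < c.
  by rewrite /e ltr_pdivrMr // ltr_pMr // ltr1n.
pose g (k : nat) := f \_ `[e k, +oo[.
have mg k : measurable_fun `]0, c] (g k).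
  apply/measurable_restrict => //; exact: measurable_funTS.
have g0 k x : `]0, c] x -> (0 <= g k x)%E.
  by move=> _; rewrite /g /patch; case: ifP => // _; rewrite /f lee_fin powR_ge0.
have ndg x : `]0, c] x -> nondecreasing_seq (g ^~ x).
  move=> _ m n mn; rewrite /g /patch.
  case: ifP => [/set_mem|_]; last by case: ifP => // _; rewrite /f lee_fin powR_ge0.
  rewrite /= in_itv /= andbT => emx.
  rewrite ifT //; apply/mem_set; rewrite /= in_itv /= andbT.
  apply: le_trans emx; rewrite /e ler_pdivrMr // mulrAC ler_pdivlMr //.
  by rewrite ler_pM2l // ler_nat.
have limg x : `]0, c] x -> limn (g ^~ x) = f x.
  rewrite /= in_itv /= => /andP[x0 _].
  apply/cvg_lim => //; apply: cvg_near_cst.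
  near=> k.
  have Nk : (Num.truncn (c / x) <= k)%N by near: k; exists (Num.truncn (c / x)).
  rewrite /g /patch ifT //; apply/mem_set; rewrite /= in_itv /= andbT.
  rewrite /e ler_pdivrMr // -ler_pdivrMl //.
  apply: ltW; apply: lt_le_trans (truncnS_gt _) _.
  by rewrite ler_nat mulrC ltnS (leq_trans Nk).
have -> : (\int[@lebesgue_measure R]_(x in `]0%R, c]) f x =
    \int[@lebesgue_measure R]_(x in `]0%R, c]) limn (g ^~ x))%E.
  by apply: eq_integral => x /set_mem /limg ->.
have MC := monotone_convergence (@lebesgue_measure R) (measurable_itv _) mg g0 ndg.
rewrite /= in MC; rewrite MC.
apply: lime_le.
  apply: ereal_nondecreasing_is_cvgn => m n mn.
  apply: ge0_le_integral => //.
  - by move=> x Dx; exact: g0.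
  - exact: mg.
  - exact: mg.
  - by move=> x Dx; exact: ndg.
apply: nearW => k.
rewrite -integral_mkcondr.
have -> : `]0, c] `&` `[e k, +oo[ = `[e k, c] :> set R.
  apply/seteqP; split => s /=; rewrite !in_itv /= ?andbT.
    by move=> [/andP[_ ->] ->].
  move=> /andP[es ->]; split => //; rewrite (lt_le_trans (e0 k) es) //.
rewrite /f int_pow //; last by rewrite gt_eqF.
rewrite lee_fin lerBlDr lerDl mulr_ge0 // ?powR_ge0 // invr_ge0 ltW //.
Unshelve. all: by end_near. Qed.

Lemma powRN_le (R : realType) (x y q : R) : 0 < x -> x <= y -> 0 <= q ->
  y `^ (- q) <= x `^ (- q).
Proof.
move=> x0 xy q0; rewrite !powRN.
have y0 : 0 < y by exact: lt_le_trans xy.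
rewrite lef_pV2 ?posrE ?powR_gt0 //.
by apply: ge0_ler_powR => //; rewrite nnegrE ltW.
Qed.

Lemma int_L (R : realType) (a q c : R) : -1 < a -> a + 1 < q -> 0 < c -> c < 1 ->
  (\int[@lebesgue_measure R]_(s in `[0%R, 1%R]) (s `^ a * (c + s) `^ (- q))%:E <=
   (((a + 1)^-1 + (q - (a + 1))^-1) * c `^ (a + 1 - q))%:E)%E.
Proof.
move=> a1 aq c0 c1.
have a10 : 0 < a + 1 by rewrite -(opprK 1) subr_gt0.
have q0 : 0 < q by exact: lt_trans aq.
have mf : measurable_fun setT (fun s : R => (s `^ a * (c + s) `^ (- q))%:E).
  apply: measurableT_comp => //.
  apply: (measurable_funM (f := fun s : R => s `^ a) (g := fun s : R => (c + s) `^ (- q))).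
    exact: measurable_powR.
  apply: (measurableT_comp (f := fun s : R => s `^ (- q)) (g := fun s : R => c + s)).
    exact: measurable_powR.
  exact: (measurable_funD (f := cst c) (g := id)).
rewrite -integral_itv_obnd_cbnd; last exact: measurable_funTS.
have -> : `]0%R, 1%R] = `]0%R, c] `|` `]c, 1%R] :> set R.
  apply/seteqP; split => s /=; rewrite !in_itv /=.
    move=> /andP[s0 s1]; have [sc|cs] := leP s c.
      by left; apply/andP.
    by right; apply/andP.
  move=> [/andP[-> sc]|/andP[cs ->]]; first by rewrite (le_trans sc) // ltW.
  by rewrite (lt_trans c0 cs).
rewrite ge0_integral_setU //; last 3 first.
- exact: measurable_funTS.
- by move=> s _; rewrite lee_fin mulr_ge0 // powR_ge0.
- rewrite disj_set2E; apply/eqP/seteqP; split => s //=; rewrite !in_itv /=.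
  by move=> [/andP[_ sc] /andP[cs _]]; move: (lt_le_trans cs sc); rewrite ltxx.
have E1 : (\int[@lebesgue_measure R]_(s in `]0%R, c]) (s `^ a * (c + s) `^ (- q))%:E <=
    ((c `^ (- q)) * ((a + 1)^-1 * c `^ (a + 1)))%:E)%E.
  apply: (@le_trans _ _ (\int[@lebesgue_measure R]_(s in `]0%R, c]) ((c `^ (- q))%:E * (s `^ a)%:E))%E).
    apply: ge0_le_integral => //.
    - by move=> s _; rewrite lee_fin mulr_ge0 // powR_ge0.
    - exact: measurable_funTS.
    - apply: measurable_funTS.
      apply: (emeasurable_funM (f := cst (c `^ (- q))%:E) (g := fun s : R => (s `^ a)%:E)) => //.
      apply: measurableT_comp => //; exact: measurable_powR.
    - move=> s; rewrite /= in_itv /= => /andP[s0 _].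
      rewrite -EFinM lee_fin mulrC ler_wpM2r ?powR_ge0 //.
      by apply: powRN_le => //; rewrite ?lerDl ltW.
  rewrite ge0_integralZl_EFin //; last 3 first.
  - by move=> s _; rewrite lee_fin powR_ge0.
  - apply: measurable_funTS; apply: measurableT_comp => //; exact: measurable_powR.
  - exact: powR_ge0.
  rewrite EFinM lee_pmul2l ?lte_fin ?powR_gt0 //.
  exact: int_pow0.
have E2 : (\int[@lebesgue_measure R]_(s in `]c, 1%R]) (s `^ a * (c + s) `^ (- q))%:E <=
    ((q - (a + 1))^-1 * c `^ (a + 1 - q))%:E)%E.
  apply: (@le_trans _ _ (\int[@lebesgue_measure R]_(s in `]c, 1%R]) (s `^ (a - q))%:E)%E).
    apply: ge0_le_integral => //.
    - by move=> s _; rewrite lee_fin mulr_ge0 // powR_ge0.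
    - exact: measurable_funTS.
    - apply: measurable_funTS; apply: measurableT_comp => //; exact: measurable_powR.
    - move=> s; rewrite /= in_itv /= => /andP[cs _].
      have s0 : 0 < s by exact: lt_trans cs.
      rewrite lee_fin powRD; last by rewrite (gt_eqF s0) implybT.
      rewrite ler_wpM2l ?powR_ge0 //.
      by apply: powRN_le => //; rewrite ?lerDr ltW.
  rewrite integral_itv_obnd_cbnd; last first.
    apply: measurable_funTS; apply: measurableT_comp => //; exact: measurable_powR.
  rewrite int_pow //; last first.
    have -> : a - q + 1 = - (q - (a + 1)) by rewrite opprB addrAC addrC addrA.
    by rewrite oppr_eq0 subr_eq0 gt_eqF.
  rewrite powR1 lee_fin.
  have -> : a - q + 1 = - (q - (a + 1)) by rewrite opprB addrAC addrC addrA.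
  have -> : a + 1 - q = - (q - (a + 1)) by rewrite opprB.
  rewrite invrN !mulNr opprK mulr1 addrC lerBlDr lerDl.
  by rewrite invr_ge0 subr_ge0 ltW.
apply: le_trans (leeD E1 E2) _.
rewrite -EFinD lee_fin mulrDl.
rewrite mulrCA -powRD; last by rewrite (gt_eqF c0) implybT.
by rewrite (addrC (- q)).
Qed.

Lemma intZ (R : realType) (k M : R) (f : R -> R) : 0 <= k ->
  measurable_fun setT f -> (forall x, 0 <= f x) ->
  (\int[@lebesgue_measure R]_(x in `[0%R, 1%R]) (f x)%:E <= M%:E)%E ->
  (\int[@lebesgue_measure R]_(x in `[0%R, 1%R]) (k * f x)%:E <= (k * M)%:E)%E.
Proof.
move=> k0 mf f0 hM.
under eq_integral do rewrite EFinM.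
rewrite ge0_integralZl_EFin //; last 2 first.
- by move=> x _; rewrite lee_fin.
- exact/measurable_funTS/measurableT_comp.
by rewrite EFinM; apply: lee_wpmul2l; rewrite ?lee_fin.
Qed.

Lemma pw (R : realType) (n : nat) (alpha beta delta p1 p2 p3 c s1 s2 t : R) :
  (2 <= n)%N -> 0 < delta -> 0 <= p1 -> 0 <= p2 -> 0 <= p3 ->
  p1 + p2 + p3 = 2 + beta -> 0 < c -> c ^+ 2 = delta ->
  0 <= s1 -> 0 <= s2 -> 0 <= t ->
  lemma6p5_integrand n alpha beta delta s1 s2 t <=
  2 `^ p3 * (s1 `^ alpha * (delta + s1) `^ (- p1)) * (s2 `^ 0 * (delta + s2) `^ (- p2))
   * (t `^ 0 * (c + t) `^ (- (2 * p3))).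
Proof.
move=> n2 d0 p10 p20 p30 hp c0 c2 s10 s20 t0.
rewrite /lemma6p5_integrand !powRr0 !mul1r.
set D := delta + s1 + s2 + t ^+ 2.
set E := delta + s1 + s2 + t.
set m := (2 * n - 3)%N.
have t2 : 0 <= t ^+ 2 by exact: exprn_ge0.
have D0 : 0 < D by rewrite /D; lra.
have E0 : 0 < E by rewrite /E; lra.
have tE : t ^+ m / E ^+ m <= 1.
  rewrite ler_pdivrMr ?exprn_gt0 // mul1r.
  by rewrite lerXn2r ?nnegrE //; rewrite /E; lra.
have -> : s1 `^ alpha * t ^+ m / (D `^ (2 + beta) * E ^+ m) =
          (s1 `^ alpha * D `^ (- (2 + beta))) * (t ^+ m / E ^+ m).
  rewrite powRN invfM; field.
  by rewrite !gt_eqF ?powR_gt0 ?exprn_gt0.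
apply: le_trans (ler_wpM2l _ tE) _.
  by rewrite mulr_ge0 ?powR_ge0.
rewrite mulr1.
rewrite -hp !opprD !powRD ?(gt_eqF D0) ?implybT //.
have h1 : D `^ (- p1) <= (delta + s1) `^ (- p1).
  by apply: powRN_le => //; [lra|rewrite /D; nra].
have h2 : D `^ (- p2) <= (delta + s2) `^ (- p2).
  by apply: powRN_le => //; [lra|rewrite /D; nra].
have h3 : D `^ (- p3) <= 2 `^ p3 * (c + t) `^ (- (2 * p3)).
  have -> : D `^ (- p3) = 2 `^ p3 * (2 * D) `^ (- p3).
    rewrite powRM ?ler0n ?ltW // mulrA -powRD ?pnatr_eq0 ?implybT //.
    by rewrite subrr powRr0 mul1r.
  rewrite ler_wpM2l ?powR_ge0 //.
  have -> : - (2 * p3) = 2 * (- p3) by ring.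
  rewrite powRrM powR_mulrn; last lra.
  apply: powRN_le => //; first by apply: exprn_gt0; lra.
  have hct : 0 <= (c - t) * (c - t) by rewrite -expr2 sqr_ge0.
  rewrite /D -c2 !expr2; nra.
have X1 := powR_ge0 D (- p1).
have X2 := powR_ge0 D (- p2).
have X3 := powR_ge0 D (- p3).
have Y := powR_ge0 s1 alpha.
rewrite -!mulrA.
apply: (@le_trans _ _ (s1 `^ alpha * ((delta + s1) `^ (- p1) * ((delta + s2) `^ (- p2) * (2 `^ p3 * (c + t) `^ (- (2 * p3))))))).
  apply: ler_wpM2l => //.
  apply: ler_pM => //; first by rewrite mulr_ge0.
  by apply: ler_pM.
by rewrite le_eqVlt; apply/orP; left; apply/eqP; ring.
Qed.

End H2.

Lemma mfun (R : realType) (a q c : R) :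
  measurable_fun setT (fun s : R => s `^ a * (c + s) `^ (- q)).
Proof.
apply: (measurable_funM (f := fun s : R => s `^ a) (g := fun s : R => (c + s) `^ (- q))).
  exact: measurable_powR.
apply: (measurableT_comp (f := fun s : R => s `^ (- q)) (g := fun s : R => c + s)).
  exact: measurable_powR.
exact: (measurable_funD (f := cst c) (g := id)).
Qed.

Lemma ige0 (R : realType) (n : nat) (alpha beta delta s1 s2 t : R) :
  0 < delta -> 0 <= s1 -> 0 <= s2 -> 0 <= t ->
  0 <= lemma6p5_integrand n alpha beta delta s1 s2 t.
Proof.
move=> d0 s10 s20 t0; rewrite /lemma6p5_integrand.
have ht : 0 <= delta + s1 + s2 + t by rewrite !addr_ge0 // ltW.
by rewrite divr_ge0 // ?mulr_ge0 ?powR_ge0 ?exprn_ge0.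
Qed.

Lemma in01 (R : realType) (x : R) : `[0%R, 1%R]%classic x -> 0 <= x.
Proof. by rewrite /= in_itv /= => /andP[]. Qed.

Theorem lemma6p5 (R : realType) (n : nat) (alpha beta : R)
  (hn : (2 <= n)%N) (hbeta : 0 <= beta) (halpha : -1 < alpha)
  (hab : alpha < beta - 2^-1) :
  exists C : R, forall delta : R, 0 < delta -> delta < 2^-1 ->
    (lemma6p5_integral n alpha beta delta
       <= (C * delta `^ (alpha - beta + 2^-1))%:E)%E.
Proof.
set e3 := (beta - alpha - 2^-1) / 3.
have e30 : 0 < e3 by rewrite /e3 divr_gt0 //; lra.
set p1 := alpha + 1 + e3.
set p2 := 1 + e3.
set p3 := 2^-1 + e3.
have hp : p1 + p2 + p3 = 2 + beta by rewrite /p1 /p2 /p3 /e3; field.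
set K1 := (alpha + 1)^-1 + (p1 - (alpha + 1))^-1.
set K2 := (0 + 1)^-1 + (p2 - (0 + 1))^-1.
set K3 := (0 + 1)^-1 + (2 * p3 - (0 + 1))^-1.
have K10 : 0 <= K1 by rewrite /K1 /p1 addr_ge0 // invr_ge0; lra.
have K20 : 0 <= K2 by rewrite /K2 /p2 addr_ge0 // invr_ge0; lra.
have K30 : 0 <= K3 by rewrite /K3 /p3 addr_ge0 // invr_ge0; lra.
exists (2 `^ p3 * K3 * K2 * K1) => delta d0 dh.
have d1 : delta < 1 by lra.
set c := delta `^ 2^-1.
have c0 : 0 < c by rewrite powR_gt0.
have c1 : c < 1.
  have := @gt0_ltr_powR R (2^-1) ltac:(by []) delta 1.
  rewrite powR1 !nnegrE => -> //; lra.
have c2 : c ^+ 2 = delta.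
  rewrite -powR_mulrn ?powR_ge0 // -powRrM mulVf ?pnatr_eq0 //.
  by rewrite powRr1 // ltW.
set A := fun s : R => s `^ alpha * (delta + s) `^ (- p1).
set B := fun s : R => s `^ 0 * (delta + s) `^ (- p2).
set Cf := fun s : R => s `^ 0 * (c + s) `^ (- (2 * p3)).
set M1 := K1 * delta `^ (alpha + 1 - p1).
set M2 := K2 * delta `^ (0 + 1 - p2).
set M3 := K3 * c `^ (0 + 1 - 2 * p3).
have hM1 : (\int[@lebesgue_measure R]_(x in `[0%R, 1%R]) (A x)%:E <= M1%:E)%E.
  by apply: int_L => //; rewrite /p1; lra.
have hM2 : (\int[@lebesgue_measure R]_(x in `[0%R, 1%R]) (B x)%:E <= M2%:E)%E.
  by apply: int_L => //; rewrite /p2; lra.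
have hM3 : (\int[@lebesgue_measure R]_(x in `[0%R, 1%R]) (Cf x)%:E <= M3%:E)%E.
  by apply: int_L => //; rewrite /p3; lra.
have A0 x : 0 <= A x by rewrite /A mulr_ge0 ?powR_ge0.
have B0 x : 0 <= B x by rewrite /B mulr_ge0 ?powR_ge0.
have C0 x : 0 <= Cf x by rewrite /Cf mulr_ge0 ?powR_ge0.
have M30 : 0 <= M3 by rewrite /M3 mulr_ge0 ?powR_ge0.
have M20 : 0 <= M2 by rewrite /M2 mulr_ge0 ?powR_ge0.
have P30 : 0 <= 2 `^ p3 by exact: powR_ge0.
have step3 s1 s2 : 0 <= s1 -> 0 <= s2 ->
  (\int[@lebesgue_measure R]_(t in `[0%R, 1%R])
     (lemma6p5_integrand n alpha beta delta s1 s2 t)%:E <=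
   ((2 `^ p3 * A s1 * M3) * B s2)%:E)%E.
  move=> s10 s20.
  apply: le_trans (@le_integral_nm R _ _ (fun t => ((2 `^ p3 * A s1 * B s2) * Cf t)%:E) _ _) _.
  - by move=> t /in01 t0; rewrite lee_fin ige0.
  - move=> t /in01 t0; rewrite lee_fin.
    apply: le_trans (pw _ _ _ _ _ _ _ _ _ _ _ _ hn d0 _ _ _ hp c0 c2 s10 s20 t0) _; try (rewrite /p1 /p2 /p3; lra).
    by [].
  apply: le_trans (intZ _ _ _ _ _ (mfun _ _ _ _) C0 hM3) _.
    by apply: mulr_ge0; [apply: mulr_ge0|].
  by rewrite lee_fin le_eqVlt; apply/orP; left; apply/eqP; ring.
have step2 s1 : 0 <= s1 ->
  (\int[@lebesgue_measure R]_(s2 in `[0%R, 1%R])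
   \int[@lebesgue_measure R]_(t in `[0%R, 1%R])
     (lemma6p5_integrand n alpha beta delta s1 s2 t)%:E <=
   ((2 `^ p3 * M3 * M2) * A s1)%:E)%E.
  move=> s10.
  apply: le_trans (@le_integral_nm R _ _ (fun s2 => ((2 `^ p3 * A s1 * M3) * B s2)%:E) _ _) _.
  - move=> s2 /in01 s20; apply: integral_ge0 => t /in01 t0.
    by rewrite lee_fin ige0.
  - by move=> s2 /in01 s20; exact: step3.
  apply: le_trans (intZ _ _ _ _ _ (mfun _ _ _ _) B0 hM2) _.
    by apply: mulr_ge0; [apply: mulr_ge0|].
  by rewrite lee_fin le_eqVlt; apply/orP; left; apply/eqP; ring.
rewrite /lemma6p5_integral.
apply: le_trans (@le_integral_nm R _ _ (fun s1 => ((2 `^ p3 * M3 * M2) * A s1)%:E) _ _) _.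
- move=> s1 /in01 s10; apply: integral_ge0 => s2 /in01 s20.
  apply: integral_ge0 => t /in01 t0.
  by rewrite lee_fin ige0.
- by move=> s1 /in01 s10; exact: step2.
apply: le_trans (intZ _ _ _ _ _ (mfun _ _ _ _) A0 hM1) _.
  by apply: mulr_ge0; [apply: mulr_ge0|].
have E1 : alpha + 1 - p1 = - e3 by rewrite /p1; ring.
have E2 : 0 + 1 - p2 = - e3 by rewrite /p2; ring.
have E3 : c `^ (0 + 1 - 2 * p3) = delta `^ (- e3).
  by rewrite /c -powRrM; congr (_ `^ _); rewrite /p3; field.
have E4 : delta `^ (alpha - beta + 2^-1) =
    delta `^ (- e3) * delta `^ (- e3) * delta `^ (- e3).
  by rewrite -!powRD ?(gt_eqF d0) ?implybT //; congr (_ `^ _); rewrite /e3; field.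
rewrite /M1 /M2 /M3 E1 E2 E3 E4.
by rewrite lee_fin le_eqVlt; apply/orP; left; apply/eqP; ring.
Qed.
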